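(* Let $K,m,n$ be integers with $n\ge1$ and $0\le m$, $2m+2\le K$, and let $a_j^2=\frac{j(K-j+1)}{4n^2}$. Define $r_1^2,r_3^2,\dots$ by $r_{2\ell+1}^2=a_{2\ell+2}^2+a_{2\ell+1}^2\prod_{j=1}^{\ell}\frac{a_{2j-1}^2}{r_{2j-1}^2}$ for $\ell\ge0$. For $k\ge 0$ set $$A_k^{[2m+1]}=-\frac{a_{2m+1-2(k-1)}^2}{a_{2m+2-2(k-1)}^2},\qquad B_k^{[2m+1]}=1+\frac{a_{2m+1-2k}^2}{a_{2m+2-2k}^2}=1-A_{k+1}^{[2m+1]},$$ and define $\mathcal R_k^{[2m+1]},\mathcal S_k^{[2m+1]}$ by $\mathcal R_{-1}^{[2m+1]}=1$, $\mathcal S_{-1}^{[2m+1]}=0$, $\mathcal R_0^{[2m+1]}=B_0^{[2m+1]}$, $\mathcal S_0^{[2m+1]}=1$ and, for $k\ge1$, $$\mathcal R_k^{[2m+1]}=B_k^{[2m+1]}\mathcal R_{k-1}^{[2m+1]}+A_k^{[2m+1]}\mathcal R_{k-2}^{[2m+1]},\qquad \mathcal S_k^{[2m+1]}=B_k^{[2m+1]}\mathcal S_{k-1}^{[2m+1]}+A_k^{[2m+1]}\mathcal S_{k-2}^{[2m+1]}.$$ Then $$\frac{r_{2m+1}^2}{a_{2m+2}^2}=\frac{\mathcal R_m^{[2m+1]}}{\mathcal S_m^{[2m+1]}}.$$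
   Context: The $a_j$ are the (off-diagonal) Jacobi recurrence coefficients of the orthonormal Krawtchouk polynomials with parameter $p=1/2$ on the lattice $\{i/n: i=-K/2,\dots,K/2\}$, i.e. $a_j^2=j(K-j+1)p(1-p)/n^2$ with $p=1/2$. *)

(* Defs.v *)
From mathcomp Require Import all_boot all_order all_algebra.
Set Implicit Arguments. Unset Strict Implicit. Unset Printing Implicit Defensive.
Import Order.TTheory GRing.Theory Num.Theory.
Local Open Scope ring_scope.

Section Defs.
Variable R : realFieldType.

Definition a2 (K n j : nat) : R :=
  (j%:R * (K%:R - j%:R + 1)) / (4 * (n%:R) ^+ 2).

(* rstate K n l = ( prod_{j=1}^{l} a_{2j-1}^2 / r_{2j-1}^2 , r_{2l+1}^2 ),
   where r_{2l+1}^2 = a_{2l+2}^2 + a_{2l+1}^2 * prod_{j=1}^{l} a_{2j-1}^2/r_{2j-1}^2. *)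
Fixpoint rstate (K n l : nat) : R * R :=
  match l with
  | 0 => (1, a2 K n 2 + a2 K n 1 * 1)
  | l'.+1 =>
      let p := (rstate K n l').1 * (a2 K n (2 * l' + 1) / (rstate K n l').2) in
      (p, a2 K n (2 * l + 2) + a2 K n (2 * l + 1) * p)
  end.

Definition r2 (K n l : nat) : R := (rstate K n l).2.

(* A_k^{[2m+1]} = - a_{2m+1-2(k-1)}^2 / a_{2m+2-2(k-1)}^2  (used for 1 <= k <= m) *)
Definition Acoef (K n m k : nat) : R :=
  - (a2 K n (2 * m + 3 - 2 * k) / a2 K n (2 * m + 4 - 2 * k)).

(* B_k^{[2m+1]} = 1 + a_{2m+1-2k}^2 / a_{2m+2-2k}^2  (used for 0 <= k <= m) *)
Definition Bcoef (K n m k : nat) : R :=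
  1 + a2 K n (2 * m + 1 - 2 * k) / a2 K n (2 * m + 2 - 2 * k).

(* rec2 A B xm1 x0 k = (x_{k-1}, x_k) for the three-term recurrence
   x_k = B k * x_{k-1} + A k * x_{k-2}  (k >= 1), x_{-1} = xm1, x_0 = x0. *)
Fixpoint rec2 (A B : nat -> R) (xm1 x0 : R) (k : nat) : R * R :=
  match k with
  | 0 => (xm1, x0)
  | k'.+1 =>
      let u := (rec2 A B xm1 x0 k').1 in
      let v := (rec2 A B xm1 x0 k').2 in
      (v, B k * v + A k * u)
  end.

Definition calR (K n m k : nat) : R :=
  (rec2 (Acoef K n m) (Bcoef K n m) 1 (Bcoef K n m 0) k).2.

Definition calS (K n m k : nat) : R :=
  (rec2 (Acoef K n m) (Bcoef K n m) 0 1 k).2.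

End Defs.

(* Main.v *)
Require Import Defs.
From mathcomp Require Import all_boot all_order all_algebra.
From mathcomp Require Import ring lra zify.
Import Order.TTheory GRing.Theory Num.Theory.
Local Open Scope ring_scope.

Section Aux.
Variable R : realFieldType.

Lemma rec2_succ (A B : nat -> R) x y k :
  rec2 A B x y k.+1 = ((rec2 A B x y k).2,
    B k.+1 * (rec2 A B x y k).2 + A k.+1 * (rec2 A B x y k).1).
Proof. by []. Qed.

Lemma rec2_S (A B : nat -> R) k :
  rec2 A B 0 1 k.+1 = rec2 (fun i => A i.+1) (fun i => B i.+1) 1 (B 1%N) k.
Proof.
elim: k => [|k IH]; first by rewrite /= mulr1 mulr0 addr0.
by rewrite [LHS]rec2_succ IH [RHS]rec2_succ.
Qed.

Lemma rec2_R (A B : nat -> R) k :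
  rec2 A B 1 (B 0%N) k.+1 =
  (B 0%N * (rec2 (fun i => A i.+1) (fun i => B i.+1) 1 (B 1%N) k).1
     + A 1%N * (rec2 (fun i => A i.+1) (fun i => B i.+1) 0 1 k).1,
   B 0%N * (rec2 (fun i => A i.+1) (fun i => B i.+1) 1 (B 1%N) k).2
     + A 1%N * (rec2 (fun i => A i.+1) (fun i => B i.+1) 0 1 k).2).
Proof.
elim: k => [|k IH]; first by rewrite /=; congr pair; ring.
rewrite [LHS]rec2_succ IH [in RHS]rec2_succ [in RHS]rec2_succ /=; congr pair; ring.
Qed.

Lemma cf_main k : forall (A B y : nat -> R),
  (forall i, (i < k)%N -> y i = B i + A i.+1 / y i.+1) -> y k = B k ->
  (forall i, (i <= k)%N -> 0 < y i) ->
  (rec2 A B 1 (B 0%N) k).2 = y 0%N * (rec2 A B 0 1 k).2 /\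
  (rec2 A B 0 1 k).2 != 0.
Proof.
elim: k => [|k IH] A B y Hy Hk Hpos /=.
  by rewrite Hk mulr1 oner_neq0.
have := IH (fun i => A i.+1) (fun i => B i.+1) (fun i => y i.+1).
case.
- by move=> i hi; apply: Hy.
- by [].
- by move=> i hi; apply: Hpos.
move=> E NZ.
have := rec2_R A B k => /(congr1 snd) /= ->.
have := rec2_S A B k => /(congr1 snd) /= ->.
have y1 : 0 < y 1%N by apply: Hpos.
split.
  rewrite E (Hy 0%N) //; field. by rewrite gt_eqF.
by rewrite E mulf_neq0 // gt_eqF.
Qed.

End Aux.

Section Spec.
Variable R : realFieldType.
Variables (K n : nat).
Hypothesis hn : (1 <= n)%N.

Lemma a2_pos j : (1 <= j <= K)%N -> 0 < a2 R K n j.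
Proof.
case/andP => h1 h2; rewrite /a2.
have hjK : (j%:R : R) <= K%:R by rewrite ler_nat.
have hj : (0 : R) < j%:R by rewrite ltr0n.
have hn' : (0 : R) < n%:R by rewrite ltr0n.
apply: divr_gt0; last by rewrite mulr_gt0 // exprn_gt0.
apply: mulr_gt0 => //.
have h0 : (0:R) <= K%:R - j%:R by rewrite subr_ge0.
by rewrite ltr_wpDl.
Qed.

Definition pst l := (rstate R K n l).1.

Lemma r2_eq l : r2 R K n l = a2 R K n (2 * l + 2) + a2 R K n (2 * l + 1) * pst l.
Proof. by case: l. Qed.

Lemma pst_S l : pst l.+1 = pst l * (a2 R K n (2 * l + 1) / r2 R K n l).
Proof. by []. Qed.

Lemma pos_l l : (2 * l + 2 <= K)%N -> 0 < pst l /\ a2 R K n (2 * l + 2) < r2 R K n l.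
Proof.
elim: l => [|l IH] hl.
  rewrite r2_eq /pst /=; split; first exact: ltr01.
  rewrite mulr1 ltrDl; apply: a2_pos; lia.
have [h1 h2] := IH ltac:(lia).
have hp : 0 < pst l.+1.
  rewrite pst_S; apply: mulr_gt0 => //; apply: divr_gt0.
    apply: a2_pos; lia.
  apply: lt_trans h2; apply: a2_pos; lia.
split => //; rewrite r2_eq ltrDl; apply: mulr_gt0 => //; apply: a2_pos; lia.
Qed.

Lemma r2_rec l : (2 * l + 4 <= K)%N ->
  r2 R K n l.+1 = a2 R K n (2 * l + 4) +
     a2 R K n (2 * l + 3) * (1 - a2 R K n (2 * l + 2) / r2 R K n l).
Proof.
move=> hl.
have [h1 h2] := pos_l l ltac:(lia).
have ha1 : 0 < a2 R K n (2 * l + 1) by apply: a2_pos; lia.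
have ha2 : 0 < a2 R K n (2 * l + 2) by apply: a2_pos; lia.
have hr : 0 < r2 R K n l by apply: lt_trans h2.
rewrite r2_eq pst_S.
have -> : (2 * l.+1 + 2 = 2 * l + 4)%N by lia.
have -> : (2 * l.+1 + 1 = 2 * l + 3)%N by lia.
have E := r2_eq l.
have -> : pst l = (r2 R K n l - a2 R K n (2 * l + 2)) / a2 R K n (2 * l + 1).
  rewrite E; field; by rewrite gt_eqF.
congr (_ + _); field; by rewrite !gt_eqF.
Qed.

End Spec.

Theorem lemma1 (R : realFieldType) (K m n : nat) (hn : (1 <= n)%N)
  (hK : (2 * m + 2 <= K)%N) :
  r2 R K n m / a2 R K n (2 * m + 2) = calR R K n m m / calS R K n m m.
Proof.
pose y i := r2 R K n (m - i) / a2 R K n (2 * (m - i) + 2).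
have Hpos : forall i, (i <= m)%N -> 0 < y i.
  move=> i hi; rewrite /y; have [_ h] := @pos_l R K n hn (m - i) ltac:(lia).
  have ha : 0 < a2 R K n (2 * (m - i) + 2) by apply: a2_pos => //; lia.
  apply: divr_gt0 => //; exact: lt_trans h.
have Hk : y m = Bcoef R K n m m.
  rewrite /y /Bcoef subnn r2_eq /pst /=.
  have -> : (2 * m + 1 - 2 * m = 1)%N by lia.
  have -> : (2 * m + 2 - 2 * m = 2)%N by lia.
  have ha : 0 < a2 R K n 2 by apply: a2_pos => //; lia.
  field; by rewrite gt_eqF.
have Hy : forall i, (i < m)%N ->
    y i = Bcoef R K n m i + Acoef R K n m i.+1 / y i.+1.
  move=> i hi; have [l El] : exists l, m = (i + l).+1 by exists (m - i - 1)%N; lia.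
  rewrite /y /Bcoef /Acoef El.
  have -> : ((i + l).+1 - i = l.+1)%N by lia.
  have -> : ((i + l).+1 - i.+1 = l)%N by lia.
  have -> : (2 * (i + l).+1 + 1 - 2 * i = 2 * l + 3)%N by lia.
  have -> : (2 * (i + l).+1 + 2 - 2 * i = 2 * l + 4)%N by lia.
  have -> : (2 * (i + l).+1 + 3 - 2 * i.+1 = 2 * l + 3)%N by lia.
  have -> : (2 * (i + l).+1 + 4 - 2 * i.+1 = 2 * l + 4)%N by lia.
  have -> : (2 * l.+1 + 2 = 2 * l + 4)%N by lia.
  rewrite (@r2_rec R K n hn l); last by lia.
  have [_ h] := @pos_l R K n hn l ltac:(lia).
  have ha2 : 0 < a2 R K n (2 * l + 2) by apply: a2_pos => //; lia.
  have ha4 : 0 < a2 R K n (2 * l + 4) by apply: a2_pos => //; lia.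
  have hr : 0 < r2 R K n l by apply: lt_trans h.
  field; by rewrite !gt_eqF.
have [E NZ] := @cf_main R m _ _ _ Hy Hk Hpos.
rewrite /calR /calS E mulfK //.
by rewrite /y subn0.
Qed.
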